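(* Fix $\theta\in[0,1]$, $u\in[0,1)$, $m\in\mathbb N$ ($m\ge2$ if $u>0$) and $h=\tau/(m-u)$. If there exists $p\in\mathbb R$ such that $$F\big(A^{\frac p2-1}BA^{-\frac p2}\big)\subseteq\bigcap_{y\in -hF(A)}D_y,$$ then the $\theta$-method is stable. (Here $-hF(A)=\{-hz: z\in F(A)\}=[-h\lambda_{\max}(A),-h\lambda_{\min}(A)]\subset(-\infty,0)$.)
   Context: Let $N\in\mathbb N$, $\tau>0$, let $A\in M_N(\mathbb C)$ be Hermitian positive definite and $B\in M_N(\mathbb C)$ arbitrary, and consider the delay differential equation $y'(t)=-Ay(t)+By(t-\tau)$. Fix $\theta\in[0,1]$, $u\in[0,1)$ and $m\in\mathbb N$ (with $m\ge2$ if $u>0$), and set the step size $h=\tau/(m-u)$. The $\theta$-method (with linear interpolation of the delayed term) is the recursion, for $n\ge0$ and arbitrary starting values $y_{-m},\dots,y_0\in\mathbb C^N$, $$y_{n+1}=y_n+h(1-\theta)\big[-Ay_n+B((1-u)y_{n-m}+u\,y_{n-m+1})\big]+h\theta\big[-Ay_{n+1}+B((1-u)y_{n-m+1}+u\,y_{n-m+2})\big].$$ The method is called stable (for these $\theta,u,m,h$) if for every choice of starting values $y_n\to0$ as $n\to\infty$. Define $a(z)=z^{m+1}-z^m$, $b(z)=\theta(uz^2+(1-u)z)+(1-\theta)(uz+(1-u))$, $c(z)=\theta z^{m+1}+(1-\theta)z^m$. For $y<0$, $D_y$ is the set of $\mu\in\mathbb C$ such that all roots $\xi$ of $a(\xi)=y\,c(\xi)-y\mu\,b(\xi)$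 satisfy $|\xi|<1$. For $s\in\mathbb R$, $A^s$ is defined via the spectral decomposition of $A$; $F(M)=\{x^*Mx:x\in\mathbb C^N,\ x^*x=1\}$ is the field of values. *)

(* Defs.v *)
From mathcomp Require Import all_boot all_order all_algebra.
From mathcomp Require Import reals exp.
From mathcomp Require Export complex.
Set Implicit Arguments. Unset Strict Implicit. Unset Printing Implicit Defensive.
Import GRing.Theory Num.Theory.
Local Open Scope ring_scope.
Local Open Scope complex_scope.

Section Defs.
Variable R : realType.
Local Notation C := R[i].

Definition adj m n (M : 'M[C]_(m, n)) : 'M[C]_(n, m) := (map_mx conjc M)^T.

Definition herm_mx N (A : 'M[C]_N) : Prop := adj A = A.
Definition posdef_mx N (A : 'M[C]_N) : Prop :=
  forall x : 'cV[C]_N, x != 0 -> 0 < (adj x *m A *m x) 0 0.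
Definition unitary_mx N (U : 'M[C]_N) : Prop := adj U *m U = 1%:M.

Definition in_fov N (M : 'M[C]_N) (z : C) : Prop :=
  exists x : 'cV[C]_N, adj x *m x = 1%:M /\ z = (adj x *m M *m x) 0 0.

(* Given a spectral decomposition A = U diag(d) U^* (U unitary_mx, d > 0),
   A^s = U diag(d^s) U^*. *)
Definition spec_pow N (U : 'M[C]_N) (d : 'rV[R]_N) (s : R) : 'M[C]_N :=
  U *m diag_mx (map_mx (fun r : R => (r `^ s)%:C) d) *m adj U.

Definition spec_decomp N (A U : 'M[C]_N) (d : 'rV[R]_N) : Prop :=
  [/\ unitary_mx U, forall i, 0 < d 0 i &
      A = U *m diag_mx (map_mx (fun r : R => r%:C) d) *m adj U].

Definition poly_a (m : nat) : {poly C} := ('X^(m.+1) - 'X^m)%R.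
Definition poly_b (theta u : R) : {poly C} :=
  theta%:C *: (u%:C *: 'X^2 + (1 - u)%:C *: 'X)
  + (1 - theta)%:C *: (u%:C *: 'X + ((1 - u)%:C)%:P).
Definition poly_c (theta : R) (m : nat) : {poly C} :=
  theta%:C *: 'X^(m.+1) + (1 - theta)%:C *: 'X^m.

Definition in_D (theta u : R) (m : nat) (y : R) (mu : C) : Prop :=
  forall xi : C,
    root (poly_a m - y%:C *: poly_c theta m + (y%:C * mu) *: poly_b theta u) xi ->
    `|xi| < 1.

(* A sequence ys, with ys k standing for y_{k-m}, satisfies the theta-method
   recursion for all n >= 0. *)
Definition theta_rec N (A B : 'M[C]_N) (theta u h : R) (m : nat)
  (ys : nat -> 'cV[C]_N) : Prop :=
  forall n : nat,
    ys (n + m).+1 =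
      ys (n + m)
      + (h * (1 - theta))%:C *:
          (- (A *m ys (n + m)) + B *m ((1 - u)%:C *: ys n + u%:C *: ys n.+1))
      + (h * theta)%:C *:
          (- (A *m ys (n + m).+1) + B *m ((1 - u)%:C *: ys n.+1 + u%:C *: ys n.+2)).

Definition theta_stable N (A B : 'M[C]_N) (theta u h : R) (m : nat) : Prop :=
  forall ys : nat -> 'cV[C]_N, theta_rec A B theta u h m ys ->
    forall eps : R, 0 < eps -> exists K : nat, forall k : nat, (K <= k)%N ->
      forall i, `|ys k i 0| < eps%:C.

End Defs.

(* Main.v *)
Require Import Defs.
From mathcomp Require Import all_boot all_order all_algebra.
From mathcomp Require Import reals exp.
From mathcomp Require Import complex.
From mathcomp Require Import ring lra.
Import Order.TTheory GRing.Theory Num.Theory.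
Local Open Scope ring_scope.
Local Open Scope complex_scope.

Section PartA.
Variable R : realType.
Local Notation C := R[i].

Definition nr (z : C) : R := complex.Re `|z|.

Lemma nrE (z : C) : `|z| = (nr z)%:C.
Proof. by rewrite /nr RRe_real // normr_real. Qed.

Lemma nr_ge0 (z : C) : 0 <= nr z.
Proof. by rewrite -lecR -nrE rmorph0 normr_ge0. Qed.

Lemma nrD (z w : C) : nr (z + w) <= nr z + nr w.
Proof. by rewrite -lecR rmorphD /= -!nrE ler_normD. Qed.

Lemma nrM (z w : C) : nr (z * w) = nr z * nr w.
Proof. by apply: complexI; rewrite rmorphM /= -!nrE normrM. Qed.

Lemma nrN (z : C) : nr (- z) = nr z.
Proof. by rewrite /nr normrN. Qed.

Lemma nr0 : nr 0 = 0.
Proof. by rewrite /nr normr0. Qed.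

Lemma nr1 : nr 1 = 1.
Proof. by rewrite /nr normr1. Qed.

Lemma nr_eq0 (z : C) : (nr z == 0) = (z == 0).
Proof. by rewrite -(inj_eq (@complexI _)) -nrE rmorph0 normr_eq0. Qed.

Definition conv0 (x : nat -> C) :=
  forall e : R, 0 < e -> exists K, forall k, (K <= k)%N -> nr (x k) < e.

Lemma first_order (r : C) (x w : nat -> C) :
  nr r < 1 -> conv0 w -> (forall k, x k.+1 = r * x k + w k) -> conv0 x.
Proof.
move=> hr hw hx e he.
set rho := nr r.
have rho0 : 0 <= rho by apply: nr_ge0.
have hP : 0 < e - rho * e.
  have : 0 < (1 - rho) * e by apply: mulr_gt0 => //; lra.
  by rewrite mulrBl mul1r.
set c := (e - rho * e) / 2.
have c0 : 0 < c by rewrite /c; lra.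
have [K HK] := hw c c0.
have step k : (K <= k)%N -> nr (x k.+1) <= rho * nr (x k) + c.
  move=> Kk; rewrite hx; apply: le_trans (nrD _ _) _; rewrite nrM.
  by apply: lerD => //; apply: ltW; apply: HK.
have stay k : (K <= k)%N -> nr (x k) < e -> nr (x k.+1) < e.
  move=> Kk lt; apply: le_lt_trans (step _ Kk) _.
  have : rho * nr (x k) <= rho * e by apply: ler_wpM2l => //; apply: ltW.
  rewrite /c; lra.
have down k : (K <= k)%N -> e <= nr (x k) -> nr (x k.+1) <= nr (x k) - c.
  move=> Kk ge; apply: le_trans (step _ Kk) _.
  have : (1 - rho) * e <= (1 - rho) * nr (x k) by apply: ler_wpM2l => //; lra.
  rewrite !mulrBl !mul1r /c; lra.
have [n Hn] : exists n : nat, nr (x K) < n%:R * c.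
  exists (Num.Def.archi_bound (nr (x K) / c)).
  rewrite -ltr_pdivrMr //; apply: archi_boundP.
  by apply: divr_ge0 => //; [apply: nr_ge0 | apply: ltW].
have key j : (exists2 i, (i <= j)%N & nr (x (K + i)%N) < e)
             \/ nr (x (K + j)%N) <= nr (x K) - j%:R * c.
  elim: j => [|j IH].
    by right; rewrite addn0 mul0r subr0.
  case: IH => [[i ij lti]|le]; first by left; exists i => //; apply: leqW.
  case: (ltrP (nr (x (K + j)%N)) e) => [lt|ge].
    by left; exists j.
  right; rewrite addnS; apply: le_trans (down _ (leq_addr _ _) ge) _.
  rewrite -natr1 mulrDl mul1r; lra.
have [i ilen lti] : exists2 i, (i <= n)%N & nr (x (K + i)%N) < e.
  case: (key n) => // le; exfalso.
  have := nr_ge0 (x (K + n)%N); lra.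
exists (K + n)%N => k Kk.
have : (K + i <= k)%N by apply: leq_trans Kk; rewrite leq_add2l.
move/subnKC <-; elim: (k - (K + i))%N => [|t IH]; first by rewrite addn0.
rewrite addnS; apply: stay => //.
by rewrite -!addnA leq_addr.
Qed.


Definition act (p : {poly C}) (x : nat -> C) (n : nat) : C :=
  \sum_(i < size p) p`_i * x (n + i)%N.

Lemma act_widen (p : {poly C}) x n k : (size p <= k)%N ->
  act p x n = \sum_(i < k) p`_i * x (n + i)%N.
Proof.
move=> hk; rewrite /act (big_ord_widen k (fun i => p`_i * x (n + i)%N) hk).
rewrite [RHS](bigID (fun i : 'I_k => (i < size p)%N)) /= [X in _ + X]big1 ?addr0 //.
by move=> i; rewrite -leqNgt => hi; rewrite nth_default // mul0r.
Qed.

Lemma act_ext p x y n : (forall t, x t = y t) -> act p x n = act p y n.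
Proof. by move=> h; apply: eq_bigr => i _; rewrite h. Qed.

Lemma act0 x n : act 0 x n = 0.
Proof. by rewrite /act size_poly0 big_ord0. Qed.

Lemma actD p q x n : act (p + q) x n = act p x n + act q x n.
Proof.
set k := maxn (size p) (size q).
rewrite (@act_widen _ x n _ (size_polyD p q)) (@act_widen p _ _ k) ?leq_maxl //.
rewrite (@act_widen q _ _ k) ?leq_maxr // -big_split /=.
by apply: eq_bigr => i _; rewrite coefD mulrDl.
Qed.

Lemma actZ c p x n : act (c *: p) x n = c * act p x n.
Proof.
rewrite (@act_widen _ x n _ (size_scale_leq c p)) /act mulr_sumr.
by apply: eq_bigr => i _; rewrite coefZ mulrA.
Qed.

Lemma actN p x n : act (- p) x n = - act p x n.
Proof. by rewrite -scaleN1r actZ mulN1r. Qed.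

Lemma actB p q x n : act (p - q) x n = act p x n - act q x n.
Proof. by rewrite actD actN. Qed.

Lemma actC c x n : act c%:P x n = c * x n.
Proof.
rewrite (@act_widen _ x n 1) ?size_polyC ?leq_b1 // big_ord1 coefC /=.
by rewrite addn0.
Qed.

Lemma actMX p x n : act (p * 'X) x n = act p x n.+1.
Proof.
have hs : (size (p * 'X)%R <= (size p).+1)%N.
  by apply: leq_trans (size_polyMleq _ _) _; rewrite size_polyX addn2.
rewrite (@act_widen _ x n _ hs) big_ord_recl coefMX /= mul0r add0r /act.
by apply: eq_bigr => i _; rewrite coefMX /= /bump /= add1n addnS.
Qed.

Lemma actXn k x n : act 'X^k x n = x (n + k)%N.
Proof.
elim: k n => [|k IH] n; first by rewrite expr0 actC mul1r addn0.
by rewrite exprSr actMX IH addSnnS.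
Qed.

Lemma act_xD p x y n : act p (fun t => x t + y t) n = act p x n + act p y n.
Proof. by rewrite /act -big_split; apply: eq_bigr => i _; rewrite mulrDr. Qed.

Lemma act_xZ p c x n : act p (fun t => c * x t) n = c * act p x n.
Proof. by rewrite /act mulr_sumr; apply: eq_bigr => i _; rewrite mulrCA. Qed.

Lemma act_x0 p n : act p (fun _ => 0) n = 0.
Proof. by rewrite /act big1 // => i _; rewrite mulr0. Qed.

Lemma act_xsum (I : finType) p (f : I -> nat -> C) n :
  act p (fun t => \sum_j f j t) n = \sum_j act p (f j) n.
Proof.
rewrite /act exchange_big /=; apply: eq_bigr => i _; by rewrite mulr_sumr.
Qed.

Lemma act_sum (I : finType) (P : I -> {poly C}) x n :
  act (\sum_j P j) x n = \sum_j act (P j) x n.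
Proof.
apply: (big_ind2 (fun p c => act p x n = c)); first by rewrite act0.
  by move=> p1 c1 p2 c2 <- <-; rewrite actD.
by [].
Qed.

Lemma act_mul p q x n : act (p * q) x n = act p (act q x) n.
Proof.
elim/poly_ind: p x n => [|p c IH] x n; first by rewrite mul0r !act0.
rewrite mulrDl mulrAC mul_polyC actD actMX IH actZ.
by rewrite actD actMX actC.
Qed.

Lemma decay_aux s : forall q : {poly C}, (size q <= s)%N -> q != 0 ->
  (forall z, root q z -> nr z < 1) ->
  forall x, (forall n, act q x n = 0) -> conv0 x.
Proof.
elim: s => [|s IH] q hs q0 hroot x hx.
  by move: q0; rewrite -size_poly_eq0; move: hs; rewrite leqn0 => ->.
case: (boolP (size q == 1%N)) => [/eqP h1|h1].
  have hq := @size1_polyC _ q (eq_leq h1).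
  have c0 : q`_0 != 0 by apply: contraNneq q0 => h; rewrite hq h.
  move=> e he; exists 0%N => k _.
  have := hx k; rewrite hq actC => /eqP; rewrite mulf_eq0 (negbTE c0) /= => /eqP ->.
  by rewrite nr0.
have [r hr] := closed_rootP q h1.
have [q' hq'] := factor_theorem q r hr.
have q'0 : q' != 0 by apply: contraNneq q0 => h; rewrite hq' h mul0r.
have hsz : size q = (size q').+1.
  by rewrite hq' size_Mmonic ?monicXsubC // size_XsubC addn2.
set w := act ('X - r%:P) x.
have hw : conv0 w.
  apply: (IH q') => //.
  - by rewrite -ltnS -hsz.
  - by move=> z hz; apply: hroot; rewrite hq' rootM hz.
  - by move=> n; rewrite /w -act_mul -hq' hx.
apply: (@first_order r x w).
- by apply: hroot.
- exact: hw.
- by move=> k; rewrite /w actB actC -[X in act X](mul1r 'X) actMX actC mul1r; ring.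
Qed.

Lemma decay (q : {poly C}) x : q != 0 -> (forall z, root q z -> nr z < 1) ->
  (forall n, act q x n = 0) -> conv0 x.
Proof. by move=> q0 hr hx; apply: (@decay_aux (size q) q (leqnn _) q0 hr x hx). Qed.


Lemma actX x n : act 'X x n = x n.+1.
Proof. by rewrite -['X]mul1r actMX actC mul1r. Qed.

Lemma act_a m y n : act (@poly_a R m) y n = y (n + m).+1 - y (n + m)%N.
Proof. by rewrite /poly_a actB !actXn addnS. Qed.

Lemma act_c th m y n : act (poly_c th m) y n =
  th%:C * y (n + m).+1 + (1 - th)%:C * y (n + m)%N.
Proof. by rewrite /poly_c actD !actZ !actXn addnS. Qed.

Lemma act_b th u y n : act (poly_b th u) y n =
  th%:C * (u%:C * y n.+2 + (1 - u)%:C * y n.+1)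
  + (1 - th)%:C * (u%:C * y n.+1 + (1 - u)%:C * y n).
Proof. by rewrite /poly_b !(actD, actZ, actXn, actX, actC) addn2. Qed.

Lemma sum_delta N (i : 'I_N) (f : 'I_N -> C) :
  \sum_j (i == j)%:R * f j = f i.
Proof.
rewrite (bigD1 i) //= eqxx mul1r big1 ?addr0 // => j hj.
by rewrite eq_sym (negbTE hj) mul0r.
Qed.

Lemma sum_vec2 N (a : 'I_N -> C) (k1 k2 : C) (v w : 'cV[C]_N) :
  \sum_j a j * (k1 *: v + k2 *: w) j 0
  = k1 * \sum_j a j * v j 0 + k2 * \sum_j a j * w j 0.
Proof.
rewrite !mulr_sumr -big_split; apply: eq_bigr => j _ /=; rewrite !mxE; ring.
Qed.

Lemma sum_lin2 N (a : 'I_N -> C) (c k1 k2 : C) (f g : 'I_N -> C) :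
  \sum_j (c * a j) * (k1 * f j + k2 * g j)
  = c * k1 * \sum_j a j * f j + c * k2 * \sum_j a j * g j.
Proof.
rewrite !mulr_sumr -big_split; apply: eq_bigr => j _ /=; ring.
Qed.

Lemma sum_lin4 N (a : 'I_N -> C) (c k1 k2 k3 k4 k5 k6 : C) (f g l : 'I_N -> C) :
  \sum_j (c * a j) * (k1 * (k2 * f j + k3 * g j) + k4 * (k5 * g j + k6 * l j))
  = c * k1 * k2 * \sum_j a j * f j + (c * k1 * k3 + c * k4 * k5) * \sum_j a j * g j
    + c * k4 * k6 * \sum_j a j * l j.
Proof.
rewrite !mulr_sumr -!big_split; apply: eq_bigr => j _ /=; ring.
Qed.

Variables (N : nat) (A B : 'M[C]_N) (theta u h : R) (m : nat).

Definition Lmx : 'M[{poly C}]_N :=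
  \matrix_(i, j) ((i == j)%:R *: @poly_a R m + (h%:C * A i j) *: poly_c theta m
                  - (h%:C * B i j) *: poly_b theta u).

Lemma rec_act ys : theta_rec A B theta u h m ys ->
  forall i n, \sum_j act (Lmx i j) (fun t => ys t j 0) n = 0.
Proof.
move=> H i n.
have := congr1 (fun M : 'cV[C]_N => M i 0) (H n).
rewrite !mxE !sum_vec2 => E.
under eq_bigr => j _ do rewrite mxE !(actB, actD, actZ, actXn, actX, actC) addnS addn2.
rewrite sumrB big_split /= sum_delta sum_lin2 sum_lin4.
rewrite E.
rewrite !rmorphM !rmorphB !rmorph1 /=.
ring.
Qed.


Lemma det_act ys : theta_rec A B theta u h m ys ->
  forall k n, act (\det Lmx) (fun t => ys t k 0) n = 0.
Proof.
move=> H k n.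
have -> : act (\det Lmx) (fun t => ys t k 0) n =
    \sum_j act ((\det Lmx)%:M k j) (fun t => ys t j 0) n.
  rewrite (bigD1 k) //= mxE eqxx mulr1n big1 ?addr0 // => j hj.
  by rewrite mxE eq_sym (negbTE hj) mulr0n act0.
rewrite -mul_adj_mx.
under eq_bigr => j _ do rewrite mxE act_sum.
rewrite exchange_big /=.
rewrite big1 // => i _.
under eq_bigr => j _ do rewrite act_mul.
rewrite -act_xsum.
rewrite (@act_ext _ _ (fun _ => 0)) ?act_x0 // => t.
exact: rec_act.
Qed.


Lemma root_det (xi : C) : (\det Lmx).[xi] = 0 ->
  exists2 v : 'cV[C]_N, v != 0 &
    (@poly_a R m).[xi] *: v + (h%:C * (poly_c theta m).[xi]) *: (A *m v)
    - (h%:C * (poly_b theta u).[xi]) *: (B *m v) = 0.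
Proof.
move=> hd.
set M := map_mx (horner_eval xi) Lmx.
have dM : \det M = 0 by rewrite det_map_mx /= horner_evalE.
have : \det M^T == 0 by rewrite det_tr dM.
case/det0P => v v0 hv.
exists v^T; first by apply: contraNneq v0 => h0; rewrite -[v]trmxK h0 trmx0.
have -> : (@poly_a R m).[xi] *: v^T + (h%:C * (poly_c theta m).[xi]) *: (A *m v^T)
    - (h%:C * (poly_b theta u).[xi]) *: (B *m v^T) = M *m v^T.
  have -> : M = (@poly_a R m).[xi]%:M + (h%:C * (poly_c theta m).[xi]) *: A
               - (h%:C * (poly_b theta u).[xi]) *: B.
    apply/matrixP => i j; rewrite !mxE horner_evalE !hornerE /= -mulr_natl.
    ring.
  rewrite !(mulmxDl, mulNmx) mul_scalar_mx -!scalemxAl.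
  done.
by rewrite -[M]trmxK -trmx_mul hv trmx0.
Qed.

End PartA.
Arguments nr {R}.
Arguments conv0 {R}.

Section PartE.
Variable R : realType.
Local Notation C := R[i].

Lemma adjM m n p (X : 'M[C]_(m, n)) (Y : 'M[C]_(n, p)) :
  adj (X *m Y) = adj Y *m adj X.
Proof. by rewrite /adj map_mxM trmx_mul. Qed.

Lemma adjK m n (X : 'M[C]_(m, n)) : adj (adj X) = X.
Proof. by apply/matrixP => i j; rewrite !mxE conjcK. Qed.

Lemma adjZ m n (k : C) (X : 'M[C]_(m, n)) : adj (k *: X) = conjc k *: adj X.
Proof. by apply/matrixP => i j; rewrite !mxE rmorphM. Qed.

Lemma adj_diag n (f : R -> R) (d : 'rV[R]_n) :
  adj (diag_mx (map_mx (fun r => (f r)%:C) d)) = diag_mx (map_mx (fun r => (f r)%:C) d).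
Proof.
apply/matrixP => i j; rewrite !mxE.
case: (eqVneq i j) => [->|hij]; first by rewrite !mulr1n conjc_real.
by rewrite !mulr0n conjc0.
Qed.

Lemma cJc (c : C) : conjc c * c = ((complex.Re c) ^+ 2 + (complex.Im c) ^+ 2)%:C.
Proof.
case: c => a b; apply/eqP; rewrite eq_complex /=; apply/andP; split; apply/eqP; ring.
Qed.


Lemma pos_norm n (z : 'cV[C]_n) : z != 0 ->
  exists2 r : R, 0 < r & adj z *m z = (r%:C)%:M.
Proof.
move=> z0.
set t := fun i : 'I_n => (complex.Re (z i 0)) ^+ 2 + (complex.Im (z i 0)) ^+ 2.
have t0 i : 0 <= t i by rewrite /t addr_ge0 ?sqr_ge0.
exists (\sum_i t i).
  case: (pickP (fun i => z i 0 != 0)) => [i hi|hall]; last first.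
    exfalso; move/eqP: z0; apply; apply/matrixP => i j.
    by rewrite ord1 mxE; move/negbFE/eqP: (hall i).
  rewrite (bigD1 i) //=; apply: ltr_pwDl; last by apply: sumr_ge0 => k _.
  rewrite lt_def t0 andbT; apply: contraNneq hi.
  rewrite /t; move: (z i 0) => [a b] /= /eqP.
  rewrite paddr_eq0 ?sqr_ge0 // !sqrf_eq0 => /andP[/eqP -> /eqP ->] //.
apply/matrixP => i j; rewrite !ord1 !mxE /= mulr1n rmorph_sum.
by apply: eq_bigr => k _; rewrite !mxE cJc.
Qed.

Lemma conjCV (s : R) : conjc ((s%:C)^-1) = (s%:C)^-1.
Proof. rewrite -fmorphV; exact: conjc_real. Qed.

Lemma norm_fov n (M : 'M[C]_n) (z : 'cV[C]_n) (r : R) :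
  0 < r -> adj z *m z = (r%:C)%:M ->
  in_fov M ((adj z *m M *m z) 0 0 / r%:C).
Proof.
move=> r0 hz.
set s := Num.sqrt r.
have s0 : 0 < s by rewrite sqrtr_gt0.
have sC : s%:C != 0 by rewrite eq_complex /= negb_and gt_eqF.
have rs : r%:C = s%:C ^+ 2 by rewrite -rmorphXn /= sqr_sqrtr // ltW.
exists ((s%:C)^-1 *: z); split.
  rewrite adjZ -scalemxAl -scalemxAr hz !scale_scalar_mx.
  rewrite conjCV; congr (_%:M).
  by rewrite rs; field.
rewrite adjZ conjCV -!scalemxAl -scalemxAr !mxE rs.
by field.
Qed.


Section Spec.
Variables (n : nat) (U : 'M[C]_n) (d : 'rV[R]_n).
Hypothesis hU : unitary_mx U.
Hypothesis hd : forall i, 0 < d 0 i.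

Local Notation S := (spec_pow U d).

Lemma UUadj : U *m adj U = 1%:M.
Proof. exact: mulmx1C. Qed.

Lemma S_mul s t : S s *m S t = S (s + t).
Proof.
rewrite /spec_pow -!mulmxA; congr (U *m _).
rewrite (mulmxA (adj U) U) hU mul1mx mulmxA mulmx_diag.
congr (diag_mx _ *m _); apply/rowP => j; rewrite !mxE -rmorphM /=.
by rewrite powRD // (gt_eqF (hd j)) implybT.
Qed.

Lemma S_0 : S 0 = 1%:M.
Proof.
rewrite /spec_pow.
have -> : map_mx (fun r : R => (r `^ 0)%:C) d = const_mx 1.
  by apply/rowP => j; rewrite !mxE powRr0.
by rewrite diag_const_mx mulmx1 UUadj.
Qed.

Lemma S_1 A : spec_decomp A U d -> S 1 = A.
Proof.
case=> _ _ ->; rewrite /spec_pow; congr (_ *m diag_mx _ *m _).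
by apply/rowP => j; rewrite !mxE powRr1 // ltW.
Qed.

Lemma adj_S s : adj (S s) = S s.
Proof. by rewrite /spec_pow !adjM adjK adj_diag mulmxA. Qed.

End Spec.


Lemma realC_neq0 (r : R) : 0 < r -> r%:C != 0.
Proof. by move=> r0; rewrite eq_complex /= negb_and gt_eqF. Qed.

Lemma fov_core N (A B : 'M[C]_N) (p : R) U d (al be ga : C) (v : 'cV[C]_N) :
  spec_decomp A U d -> v != 0 ->
  al *: v + be *: (A *m v) - ga *: (B *m v) = 0 ->
  exists rw rg X : _,
   [/\ 0 < rw, 0 < rg,
    in_fov (spec_pow U d (p / 2 - 1) *m B *m spec_pow U d (- (p / 2))) (X / rw%:C),
    in_fov A (rw%:C / rg%:C) &
    al * rg%:C + be * rw%:C - ga * X = 0].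
Proof.
move=> hD v0 E0.
have [hU hd hA] := hD.
have SM s t : spec_pow U d s *m spec_pow U d t = spec_pow U d (s + t) by apply: S_mul.
have S0 : spec_pow U d 0 = 1%:M by apply: S_0.
have S1 : spec_pow U d 1 = A by apply: S_1.
have SA s : adj (spec_pow U d s) = spec_pow U d s by apply: adj_S.
move: (spec_pow U d) SM S0 S1 SA => S SM S0 S1 SA.
have [w wdef] : exists w, w = S (p / 2) *m v by eexists.
have hv : v = S (- (p / 2)) *m w by rewrite wdef mulmxA SM addNr S0 mul1mx.
have w0 : w != 0 by apply: contraNneq v0 => h0; rewrite hv h0 mulmx0.
have [g gdef] : exists g, g = S (- (1 / 2)) *m w by eexists.
have wg : w = S (1 / 2) *m g by rewrite gdef mulmxA SM addrN S0 mul1mx.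
have g0 : g != 0 by apply: contraNneq w0 => h0; rewrite wg h0 mulmx0.
have adjg : adj g = adj w *m S (- (1 / 2)) by rewrite gdef adjM SA.
have I1 : adj w *m S (p / 2 - 1) *m v = adj g *m g.
  rewrite hv adjg gdef !mulmxA -[adj w *m S _ *m S _]mulmxA SM.
  rewrite -[adj w *m S _ *m S _]mulmxA SM.
  by congr (_ *m S _ *m _); field.
have I2 : adj w *m S (p / 2 - 1) *m (A *m v) = adj w *m w.
  rewrite hv -S1 !mulmxA -[adj w *m S _ *m S _]mulmxA SM.
  rewrite -[adj w *m S _ *m S _]mulmxA SM.
  by rewrite (_ : p / 2 - 1 + 1 + - (p / 2) = 0) ?S0 ?mulmx1 //; field.
have I3 : adj w *m S (p / 2 - 1) *m (B *m v) = adj w *m (S (p / 2 - 1) *m B *m S (- (p / 2))) *m w.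
  by rewrite hv !mulmxA.
have I4 : adj g *m A *m g = adj w *m w.
  rewrite adjg gdef -S1 !mulmxA -[adj w *m S _ *m S _]mulmxA SM.
  rewrite -[adj w *m S _ *m S _]mulmxA SM.
  by rewrite (_ : - (1 / 2) + 1 + - (1 / 2) = 0) ?S0 ?mulmx1 //; field.
have E1 := congr1 (fun Y => (adj w *m S (p / 2 - 1) *m Y) 0 0) E0.
move: E1 => /=; rewrite mulmxBr mulmxDr -!scalemxAr I1 I2 I3 mulmx0.
have [rw rw0 hw] := @pos_norm _ w w0.
have [rg rg0 hg] := @pos_norm _ g g0.
have fM := @norm_fov _ (S (p / 2 - 1) *m B *m S (- (p / 2))) w rw rw0 hw.
have fA := @norm_fov _ A g rg rg0 hg.
rewrite I4 hw mxE mulr1n in fA.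
rewrite hw hg.
move: fM; move: (adj w *m (S (p / 2 - 1) *m B *m S (- (p / 2))) *m w) => Xm fM.
rewrite !mxE !mulr1n => E1.
exists rw, rg, (Xm 0 0).
by split.
Qed.

Lemma fov_root N (A B : 'M[C]_N) (theta u h : R) (m : nat) (p : R) U d
    (xi : C) (v : 'cV[C]_N) :
  spec_decomp A U d ->
  (forall z, in_fov (spec_pow U d (p / 2 - 1) *m B *m spec_pow U d (- (p / 2))) z ->
     forall y : R, (exists w : C, in_fov A w /\ y%:C = - h%:C * w) ->
     in_D theta u m y z) ->
  v != 0 ->
  (@poly_a R m).[xi] *: v + (h%:C * (poly_c theta m).[xi]) *: (A *m v)
    - (h%:C * (poly_b theta u).[xi]) *: (B *m v) = 0 ->
  `|xi| < 1.
Proof.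
move=> hD hfov v0 E0.
have [rw [rg [X [rw0 rg0 fM fA E1]]]] := @fov_core _ _ _ p _ _ _ _ _ _ hD v0 E0.
have hy : exists w : C, in_fov A w /\ (- h * (rw / rg))%:C = - h%:C * w.
  exists (rw%:C / rg%:C); split => //.
  rewrite !(rmorphM, rmorphN) /= fmorphV /=; ring.
apply: (hfov _ fM _ hy).
move: E1; move: (@poly_a R m) (poly_c theta m) (poly_b theta u) => PA PC PB E1.
rewrite /root !(hornerD, hornerN, hornerZ).
have rwC := realC_neq0 rw rw0; have rgC := realC_neq0 rg rg0.
move: E1; move: PA.[xi] PC.[xi] PB.[xi] => a c b E1.
have -> : a - (- h * (rw / rg))%:C * c + (- h * (rw / rg))%:C * (X / rw%:C) * b
   = (a * rg%:C + h%:C * c * rw%:C - h%:C * b * X) / rg%:C.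
  rewrite !(rmorphM, rmorphN) /= fmorphV /=; field.
  by apply/andP.
by rewrite E1 mul0r eqxx.
Qed.

End PartE.

Theorem mainTheorem4 (R : realType) (N : nat) (tau : R) (A B : 'M[R[i]]_N)
  (theta u : R) (m : nat) :
  0 < tau -> herm_mx A -> posdef_mx A ->
  0 <= theta <= 1 -> 0 <= u < 1 -> (0 < m)%N -> (0 < u -> (2 <= m)%N) ->
  let h := tau / (m%:R - u) in
  (exists (p : R) (U : 'M[R[i]]_N) (d : 'rV[R]_N),
     spec_decomp A U d /\
     forall z : R[i],
       in_fov (spec_pow U d (p / 2 - 1) *m B *m spec_pow U d (- (p / 2))) z ->
       forall y : R,
         (exists w : R[i], in_fov A w /\ (y%:C)%C = - (h%:C)%C * w) ->
         in_D theta u m y z) ->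
  theta_stable A B theta u h m.
Proof.
move=> htau hH hP hth hu hm hum h [p [U [d [hD hfov]]]].
move=> ys hrec eps heps.
set L := Lmx R N A B theta u h m.
have hroot : forall xi, root (\det L) xi -> nr xi < 1.
  move=> xi /eqP hq.
  have [v v0 hv] := @root_det R N A B theta u h m xi hq.
  have := @fov_root R N A B theta u h m p U d xi v hD hfov v0 hv.
  by rewrite nrE -(rmorph1 (@real_complex R)) ltcR.
have q0 : \det L != 0.
  apply/negP => /eqP q0.
  have := hroot 1; rewrite /root q0 horner0 eqxx nr1 ltxx.
  by move=> /(_ isT).
have conv k : conv0 (fun t => ys t k 0).
  exact: (@decay R (\det L) _ q0 hroot (@det_act R N A B theta u h m ys hrec k)).
have [f hf] := @fin_all_exists _ (fun=> nat)
  (fun k K => forall t, (K <= t)%N -> nr (ys t k 0) < eps) (fun k => conv k eps heps).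
exists (\max_k f k) => t ht i.
rewrite nrE ltcR; apply: hf.
by apply: leq_trans ht; apply: leq_bigmax.
Qed.
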